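(* Consider the ring network, traffic model and shortest-path routing described in the context, and fix a wavelength $\lambda\in\{1,\ldots,\Lambda\}$. For every $n\in\{0,\ldots,N-1\}$, \[ \mathbb{P}\big(\overset{\curvearrowright}{n}_{\lambda}\big)=\mathbb{P}\big(\overset{\curvearrowright}{(\lceil n\rceil_{\lambda})}_{\lambda}\big)-\mathbb{P}\big(S\in\{n,\ldots,\lceil n\rceil_{\lambda}-1\},\ \mathcal{G}_{\lambda}\neq S\big), \] where $\lceil n\rceil_\lambda:=\left\lceil \frac{n-\lambda}{\Lambda}\right\rceil\Lambda+\lambda$ (node and segment indices modulo $N$; the set $\{n,\ldots,\lceil n\rceil_\lambda-1\}$ is empty if $n=\lceil n\rceil_\lambda$). In particular, the utilization of any segment on $\lambda$ is at most that of the segment $u_{\lceil n\rceil_\lambda}$ leading into the next node homed on $\lambda$.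
   Context: Network: a bidirectional ring with $N$ nodes labeled $1,\ldots,N$ in clockwise order; node labels are taken modulo $N$, so node $N$ is also called node $0$. There are $\Lambda$ wavelength channels $1,\ldots,\Lambda$ in each ring direction, and $\eta:=N/\Lambda$ is a positive integer. Node $n$ receives (is homed) on wavelength $\lambda$ iff $n\in\mathcal{M}_\lambda:=\{\lambda+k\Lambda: k=0,\ldots,\eta-1\}$. For $1\le n\le N$, $u_n$ denotes the clockwise ring segment from node $n-1$ to node $n$. Node $N$ is the hotspot. Traffic: each packet has a sender $S$ and a destination (fanout) set $\mathcal{F}\subset\{1,\ldots,N\}\setminus\{S\}$, generated as follows, with $\alpha,\beta,\gamma\ge 0$, $\alpha+\beta+\gamma=1$. With probability $\alpha$ (uniform traffic): $S$ is uniform on $\{1,\ldots,N\}$, a fanout $l\in\{1,\ldots,N-1\}$ is drawn from a distribution $(\mu_l)$, and $\mathcal{F}$ is uniform among $l$-subsets of $\{1,\ldots,N\}\setminus\{S\}$. With probability $\beta$ (hotspot destination traffic): $S$ is uniform on $\{1,\ldots,N-1\}$, $l$ is drawn from $(\nu_l)$, and $\mathcal{F}=\mathcal{F}'\cup\{N\}$ with $\mathcal{F}'$ uniform among $(l-1)$-subsets of $\{1,\ldots,N-1\}\setminus\{S\}$. With probability $\gamma$ (hotspot source traffic): $S=N$, $l$ is drawn from $(\kappa_l)$, and $\mathcal{F}$ is uniform among $l$-subsets of $\{1,\ldots,N-1\}$. $\mathbb{P}$ denotes the probability measure of this model. Shortest-path routing on wavelength $\lambda$: let $\mathcal{F}_\lambda:=\mathcal{F}\cap\mathcal{M}_\lambda$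 and $\mathcal{A}_\lambda:=\mathcal{F}_\lambda\cup\{S\}$. The ''gaps'' are the clockwise arcs between cyclically consecutive nodes of $\mathcal{A}_\lambda$ (if $\mathcal{A}_\lambda=\{X_1<\dots<X_{\ell+1}\}$, their lengths are $X_1+N-X_{\ell+1}$ and $X_{i}-X_{i-1}$). A largest gap is chosen, uniformly at random among ties ($CLG_\lambda$), and $\mathcal{G}_\lambda\in\{0,\ldots,N-1\}$ denotes the node at which $CLG_\lambda$ starts (clockwise). The packet is sent on $\lambda$ from $S$ clockwise up to $\mathcal{G}_\lambda$ and counterclockwise up to the node ending $CLG_\lambda$, so exactly the segments outside $CLG_\lambda$ are traversed. The event $\overset{\curvearrowright}{n}_{\lambda}$ means that segment $u_n$ is traversed clockwise on wavelength $\lambda$, i.e., $u_n$ lies on the clockwise arc from $S$ to $\mathcal{G}_\lambda$. *)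

(* Defs.v *)
From mathcomp Require Import all_boot all_order all_algebra.
Set Implicit Arguments. Unset Strict Implicit. Unset Printing Implicit Defensive.
Import Order.TTheory GRing.Theory Num.Theory.
Local Open Scope ring_scope.

(* Nodes: node label n in {1,..,N} is represented by n mod N in 'I_N,
   so node N (the hotspot) is the ordinal 0. *)
Section Ring.
Variables (N Lam : nat).

Definition homed (lam : nat) (x : 'I_N) : bool := (x %% Lam == lam %% Lam)%N.

(* clockwise distance from node a to node b (indices mod N) *)
Definition cwd (a b : nat) : nat := ((b %% N) + N - (a %% N)) %% N.

Definition Aset (lam : nat) (S : 'I_N) (F : {set 'I_N}) : {set 'I_N} :=
  S |: [set x in F | homed lam x].

(* length of the gap starting (clockwise) at a \in A: distance to the next
   element of A clockwise, or N if A = {a} *)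
Definition gaplen lam S F (a : 'I_N) : nat :=
  \big[minn/N]_(b in Aset lam S F | b != a) cwd a b.

Definition maxgap lam S F : nat := \max_(a in Aset lam S F) gaplen lam S F a.

Definition largest_gaps lam S F : {set 'I_N} :=
  [set a in Aset lam S F | gaplen lam S F a == maxgap lam S F].

End Ring.

(* ceil((n - lam)/Lam) * Lam + lam, as an integer; ceil(x/d) = - floor(-x/d) *)
Definition lceil (Lam lam n : nat) : int :=
  (- divz (- (n%:Z - lam%:Z)) Lam%:Z) * Lam%:Z + lam%:Z.

Section Prob.
Variables (R : realFieldType) (N : nat).
Variables (alpha beta gamma : R) (mu nu kappa : nat -> R).

(* probability of (sender S, fanout set F) *)
Definition traffic_weight (S : 'I_N) (F : {set 'I_N}) : R :=
  alpha * (N%:R)^-1 *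
    (if (S \notin F) && (0 < #|F|)%N
     then mu #|F| / ('C(N.-1, #|F|))%:R else 0)
  + beta *
    (if [&& (S != 0 :> nat), [exists x in F, x == 0 :> nat] & S \notin F]
     then (N.-1%:R)^-1 * (nu #|F| / ('C(N.-2, #|F|.-1))%:R) else 0)
  + gamma *
    (if [&& (S == 0 :> nat), S \notin F & (0 < #|F|)%N]
     then kappa #|F| / ('C(N.-1, #|F|))%:R else 0).

Definition Outcome := ('I_N * {set 'I_N} * 'I_N)%type.

(* outcome (S, F, G) where G = start node of the chosen largest gap,
   chosen uniformly among ties *)
Definition outcome_weight (Lam lam : nat) (w : Outcome) : R :=
  let: (Sd, F, G) := w in
  traffic_weight Sd F *
    (if G \in largest_gaps Lam lam Sd F
     then (#|largest_gaps Lam lam Sd F|%:R)^-1 else 0).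

Definition Prob (Lam lam : nat) (E : pred Outcome) : R :=
  \sum_(w : Outcome) outcome_weight Lam lam w * (E w)%:R.

End Prob.

(* event: segment u_n (from n-1 to n, indices mod N) lies on the clockwise arc
   from S to G *)
Definition cw_event (N : nat) (n : nat) (w : Outcome N) : bool :=
  let: (Sd, F, G) := w in (0 < cwd N Sd n <= cwd N Sd G)%N.

(* event: S \in {n, ..., c-1} (mod N) and G <> S *)
Definition window_event (N : nat) (n : nat) (c : int) (w : Outcome N) : bool :=
  let: (Sd, F, G) := w in
  has (fun k : int => modz k N%:Z == (Sd : nat)%:Z)
      [seq n%:Z + i%:Z | i <- iota 0 `|c - n%:Z|%N]
  && (G != Sd).

(* Main.v *)
Require Import Defs.
From mathcomp Require Import all_boot all_order all_algebra.
From mathcomp Require Import zify ring.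
Import Order.TTheory GRing.Theory Num.Theory.
Lemma cwdE {N a b : nat} : (a < N)%N -> (b < N)%N ->
  cwd N a b = if (a <= b)%N then (b - a)%N else (b + N - a)%N.
Proof.
move=> ha hb; rewrite /cwd (modn_small hb) (modn_small ha); case: leqP => h.
have -> : (b + N - a = b - a + N)%N by lia.
  by rewrite modnDr modn_small //; lia.
by rewrite modn_small //; lia.
Qed.

Lemma modN2 (N c : nat) : (c < N + N)%N -> c %% N = if (c < N)%N then c else (c - N)%N.
Proof.
move=> h; case: ifP => hc; first by rewrite modn_small.
have -> : c = (c - N) + N by lia.
by rewrite modnDr modn_small; lia.
Qed.

Definition inwin (N n c0 x : nat) : bool := (n <= x < c0)%N || (n <= x + N < c0)%N.

Lemma key (N Lam n c0 s g : nat) : (s < N)%N -> (g < N)%N -> (n < N)%N ->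
  (n <= c0)%N -> (c0 < n + Lam)%N -> (Lam <= N)%N ->
  (g == s) || ~~ inwin N n c0 g ->
  ((0 < cwd N s (c0 %% N) <= cwd N s g) =
   (0 < cwd N s n <= cwd N s g) || (inwin N n c0 s && (g != s)))%N
  /\ ~~ ((0 < cwd N s n <= cwd N s g) && (inwin N n c0 s && (g != s)))%N.
Proof.
move=> hs hg hn h1 h2 h3; rewrite /inwin.
have [c hc1 hc2] : exists2 c, c0 %% N = c & (c0 < N /\ c = c0) \/ (N <= c0 /\ c = c0 - N)%N.
  exists (c0 %% N) => //; rewrite modN2; last by lia.
  by case: ifP => [?|/negbT ?]; lia.
have hc : (c < N)%N by lia.
rewrite hc1 (cwdE hs hc) (cwdE hs hg) (cwdE hs hn).
do 3 case: ifP => [?|/negbT ?]; lia.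
Qed.

Local Open Scope ring_scope.

Lemma lceil_spec (Lam lam n : nat) : (0 < Lam)%N ->
  let r := `|modz (lam%:Z - n%:Z) Lam%:Z|%N in
  [/\ lceil Lam lam n = (n + r)%N%:Z, (r < Lam)%N &
    forall x : nat, (n <= x < n + r)%N -> (x %% Lam != lam %% Lam)%N].
Proof.
move=> hL r.
have hL0 : Lam%:Z != 0 by lia.
have hr : r%:Z = modz (lam%:Z - n%:Z) Lam%:Z by rewrite /r gez0_abs // modz_ge0.
split.
- rewrite /lceil PoszD hr opprB.
  have := divz_eq (lam%:Z - n%:Z) Lam%:Z.
  rewrite mulNr; set t := (_ * Lam%:Z); set m := (_ %% _)%Z.
  lia.
- have h0 : 0 < Lam%:Z by lia.
  have := ltz_pmod (lam%:Z - n%:Z) h0.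
  rewrite -hr; lia.
- move=> x /andP[h1 h2]; apply/negP => /eqP hx.
  have : (modz x%:Z Lam%:Z == modz lam%:Z Lam%:Z) by rewrite !modz_nat hx.
  rewrite eqz_mod_dvd => /dvdzP [q hq].
  have e : lam%:Z - n%:Z = (- q) * Lam%:Z + (x - n)%N%:Z.
    rewrite mulNr -hq; lia.
  have : modz (lam%:Z - n%:Z) Lam%:Z = (x - n)%N%:Z.
    rewrite e modzMDl modz_small //; apply/andP; split => //; lia.
  rewrite -hr; lia.
Qed.

Lemma win_has (N n r s : nat) : (s < N)%N -> (n < N)%N -> (r <= N)%N ->
  has (fun k : int => modz k N%:Z == s%:Z) [seq n%:Z + i%:Z | i <- iota 0 r]
  = inwin N n (n + r) s.
Proof.
move=> hs hn hr; apply/hasP/idP.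
- move=> [k /mapP [i hi ->]]; rewrite mem_iota add0n in hi.
  rewrite -PoszD modz_nat => /eqP [] hm.
  have hN : (0 < N)%N by lia.
  have := div.divn_eq (n + i)%N N; rewrite hm /inwin.
  have : ((n + i) %/ N < 2)%N by rewrite ltn_divLR //; lia.
  case: ((n + i) %/ N)%N => [|[|?]] //; lia.
- rewrite /inwin => /orP [] /andP [h1 h2].
  + exists (n%:Z + (s - n)%N%:Z); first by apply/mapP; exists (s - n)%N; rewrite // mem_iota; lia.
    rewrite -PoszD modz_nat; apply/eqP; congr Posz; rewrite modn_small; lia.
  + exists (n%:Z + (s + N - n)%N%:Z); first by apply/mapP; exists (s + N - n)%N; rewrite // mem_iota; lia.
    rewrite -PoszD modz_nat; apply/eqP; congr Posz.
    have -> : (n + (s + N - n) = s + N)%N by lia.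
    by rewrite modnDr modn_small.
Qed.

Lemma orR (R : realFieldType) (a b : bool) : ~~ (a && b) -> ((a || b)%:R : R) = a%:R + b%:R.
Proof. by case: a; case: b => //= _; rewrite ?addr0 ?add0r. Qed.

Lemma tw_ge0 (R : realFieldType) (N : nat) (alpha beta gamma : R) (mu nu kappa : nat -> R)
  (ha : 0 <= alpha) (hb : 0 <= beta) (hg : 0 <= gamma)
  (hmu : forall l, 0 <= mu l) (hnu : forall l, 0 <= nu l)
  (hkappa : forall l, 0 <= kappa l) S F :
  0 <= @traffic_weight R N alpha beta gamma mu nu kappa S F.
Proof.
rewrite /traffic_weight; apply: addr_ge0; first apply: addr_ge0.
- apply: mulr_ge0; first by apply: mulr_ge0; rewrite // invr_ge0 ler0n.
  by case: ifP => // _; apply: divr_ge0; rewrite // ler0n.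
- apply: mulr_ge0 => //; case: ifP => // _; apply: mulr_ge0; first by rewrite invr_ge0 ler0n.
  by apply: divr_ge0; rewrite // ler0n.
- apply: mulr_ge0 => //; case: ifP => // _.
  by apply: divr_ge0; rewrite // ler0n.
Qed.

Theorem corollary3p2 (R : realFieldType) (Lam eta N : nat)
  (hLam : (0 < Lam)%N) (heta : (0 < eta)%N) (hN : N = (eta * Lam)%N)
  (alpha beta gamma : R) (mu nu kappa : nat -> R)
  (ha : 0 <= alpha) (hb : 0 <= beta) (hg : 0 <= gamma)
  (habg : alpha + beta + gamma = 1)
  (hmu : forall l, 0 <= mu l) (hnu : forall l, 0 <= nu l)
  (hkappa : forall l, 0 <= kappa l)
  (hmu1 : \sum_(1 <= l < N) mu l = 1)
  (hnu1 : \sum_(1 <= l < N) nu l = 1)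
  (hkappa1 : \sum_(1 <= l < N) kappa l = 1)
  (lam : nat) (hlam : (1 <= lam <= Lam)%N) (n : nat) (hn : (n < N)%N) :
  let P := @Prob R N alpha beta gamma mu nu kappa Lam lam in
  let c := lceil Lam lam n in
  P (cw_event n) =
    P (cw_event `|modz c N%:Z|%N) - P (window_event n c)
  /\ P (cw_event n) <= P (cw_event `|modz c N%:Z|%N).
Proof.
move=> P c.
have [hc hr hno] := @lceil_spec Lam lam n hLam.
set r := `|_|%N in hc hr hno.
have hLN : (Lam <= N)%N by rewrite hN leq_pmull.
have hmod : `|modz c N%:Z|%N = ((n + r) %% N)%N by rewrite /c hc modz_nat.
have hcn : `|c - n%:Z|%N = r by rewrite /c hc; have -> : ((n + r)%N%:Z - n%:Z = r%:Z) by lia.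
have hw : forall w : Outcome N, 0 <= outcome_weight alpha beta gamma mu nu kappa Lam lam w.
  move=> [[S F] G]; rewrite /outcome_weight; apply: mulr_ge0; first exact: tw_ge0.
  by case: ifP => // _; rewrite invr_ge0 ler0n.
have E : P (cw_event `|modz c N%:Z|%N) = P (cw_event n) + P (window_event n c).
  rewrite /P /Prob -big_split; apply: eq_bigr => -[[S F] G] _ /=.
  rewrite /outcome_weight; case: ifP => hG; last by rewrite !mulr0 !mul0r ?addr0.
  rewrite -mulrDr; congr (_ * _).
  rewrite /cw_event /window_event hmod hcn win_has //; last by lia.
  have hGA : (G == S) || ~~ inwin N n (n + r) G.
    move: hG; rewrite inE /Aset => /andP [].
    rewrite !inE => /orP [-> //|/andP [_ hh] _]; apply/orP; right.
    rewrite /inwin; apply/negP => /orP [] hin.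
    - by move: (hno _ hin); rewrite /homed in hh; rewrite (eqP hh) eqxx.
    - have e : ((G + N) %% Lam = G %% Lam)%N.
        by move: (nat_of_ord G) => g; rewrite hN addnC modnMDl.
      by move: (hno _ hin); rewrite /homed in hh; rewrite e (eqP hh) eqxx.
  have h2 : (n + r < n + Lam)%N by lia.
  have [e1 e2] := key _ _ _ _ _ _ (ltn_ord S) (ltn_ord G) hn (leq_addr _ _) h2 hLN hGA.
  by rewrite e1; apply: orR.
split; first by rewrite E addrK.
rewrite E lerDl /P /Prob; apply: sumr_ge0 => w _; apply: mulr_ge0; rewrite ?ler0n //.
Qed.
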